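(* Let $N\ge 1$ be an integer and let $q$ satisfy one of the following: (i) $q$ is real with $q>0$; or (ii) $q=e^{i\pi\varphi}$ with $0<\varphi<\frac{1}{2N}$. Let $\pi_N:U_q(su(2))\to \mathrm{End}(V_N)$ be the $(N+1)$-dimensional irreducible representation, equipped with the Hilbert space structure making it a unitary ($*$-)representation for the star structure $H^*=H$, $(X^\pm)^*=X^\mp$. Let $\mathcal{S}^2_{q,N}:=\mathrm{End}(V_N)$, with involution $f\mapsto f^*$ the Hilbert space adjoint, and for $r>0$ define the integral $$\int f := \frac{4\pi r^2}{[N+1]_q}\,\mathrm{Tr}\big(f\,\pi_N(q^{H})\big),\qquad f\in \mathcal{S}^2_{q,N}.$$ Then for every $f\in\mathcal{S}^2_{q,N}$: in case (i), $\overline{\int f}=\int f^*$; in case (ii), $\overline{\int f}=\int f^*\,\pi_N(q^{-2H})$. (Here the bar denotes complex conjugation.)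
   Context: $U_q(su(2))$ is the algebra generated by $H,X^+,X^-$ with relations $[H,X^\pm]=\pm 2X^\pm$, $[X^+,X^-]=[H]_q:=\frac{q^H-q^{-H}}{q-q^{-1}}$; $q$-numbers are $[n]_q=\frac{q^n-q^{-n}}{q-q^{-1}}$. Its Hopf structure is $\Delta(H)=H\otimes1+1\otimes H$, $\Delta(X^\pm)=X^\pm\otimes q^{H/2}+q^{-H/2}\otimes X^\pm$, $S(H)=-H$, $S(X^\pm)=-q^{\pm1}X^\pm$, $\varepsilon(H)=\varepsilon(X^\pm)=0$. On $V_N$, $q^{H}$ acts diagonally in a weight basis, by $q^m$ on a vector of $H$-weight $m$. Under the stated assumptions on $q$, $V_N$ admits an inner product for which $\pi_N(u^* )=\pi_N(u)^\dagger$. The algebra $\mathcal{S}^2_{q,N}$ is the $q$-deformed fuzzy sphere (it is generated by the images of the $U_q(su(2))$ generators). *)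

(* Defs.v *)
From HB Require Import structures.
From mathcomp Require Import all_boot all_order all_algebra.
From mathcomp Require Import reals trigo.
From mathcomp Require Export complex.
Set Implicit Arguments. Unset Strict Implicit. Unset Printing Implicit Defensive.
Import Order.TTheory GRing.Theory Num.Theory.
Local Open Scope ring_scope.
Local Open Scope complex_scope.

Section Defs.
Variable R : realType.
Local Notation C := R[i].

Definition qnum (q : C) (n : int) : C :=
  if q == 1 then n%:~R else (q ^ n - q ^ (- n)) / (q - q^-1).

Variable N : nat.

(* Weight basis v_0, ..., v_N of V_N (dimension N+1); H v_k = (N - 2k) v_k. *)
Definition wt (k : 'I_N.+1) : int := (N%:Z - 2%:Z * k%:Z)%R.

(* Matrices act on column vectors: entry (i, j) is the coefficient of v_i
   in the image of v_j. *)
Definition piH : 'M[C]_N.+1 :=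
  \matrix_(i, j) (if i == j then (wt i)%:~R else 0).

(* X^+ v_k = [N-k+1]_q v_{k-1},  X^- v_k = [k+1]_q v_{k+1}. *)
Definition piXp (q : C) : 'M[C]_N.+1 :=
  \matrix_(i, j) (if val j == (val i).+1 then qnum q (N - i)%N else 0).
Definition piXm (q : C) : 'M[C]_N.+1 :=
  \matrix_(i, j) (if val i == (val j).+1 then qnum q i else 0).

Definition piqH (q : C) (a : int) : 'M[C]_N.+1 :=
  \matrix_(i, j) (if i == j then q ^ (a * wt i) else 0).

Definition ctr (A : 'M[C]_N.+1) : 'M[C]_N.+1 := (map_mx Num.conj A)^T.

(* An inner product <u, v> = u^* G v on C^(N+1) (antilinear in the first
   argument), given by its Gram matrix G in the weight basis. *)
Definition inner_product (G : 'M[C]_N.+1) : Prop :=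
  ctr G = G /\
  forall v : 'cV[C]_N.+1, v != 0 -> 0 < ((map_mx Num.conj v)^T *m G *m v) 0 0.

(* Hilbert-space adjoint of f with respect to the inner product G. *)
Definition adj (G f : 'M[C]_N.+1) : 'M[C]_N.+1 := invmx G *m ctr f *m G.

Definition star_rep (q : C) (G : 'M[C]_N.+1) : Prop :=
  adj G piH = piH /\ adj G (piXp q) = piXm q /\ adj G (piXm q) = piXp q.

Definition integral (q : C) (r : R) (f : 'M[C]_N.+1) : C :=
  ((4 * pi * r ^+ 2)%:C / qnum q (N.+1)%N) * \tr (f *m piqH q 1).

End Defs.

(* Main.v *)
Require Import Defs.
From HB Require Import structures.
From mathcomp Require Import all_boot all_order all_algebra.
From mathcomp Require Import reals trigo complex.
From mathcomp Require Import zify.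
Import Order.TTheory GRing.Theory Num.Theory.
Local Open Scope ring_scope.
Local Open Scope complex_scope.

Section H.
Variable R : realType.
Local Notation C := R[i].
Variable n : nat.

Definition Dm (d : 'I_n.+1 -> C) : 'M[C]_n.+1 :=
  \matrix_(i, j) (if i == j then d i else 0).

Lemma mulDmE d (A : 'M[C]_n.+1) i j : (Dm d *m A) i j = d i * A i j.
Proof.
rewrite !mxE (bigD1 i) //= big1 ?addr0 ?mxE ?eqxx // => k /negbTE hk.
by rewrite mxE eq_sym hk mul0r.
Qed.

Lemma mulmDE d (A : 'M[C]_n.+1) i j : (A *m Dm d) i j = A i j * d j.
Proof.
rewrite !mxE (bigD1 j) //= big1 ?addr0 ?mxE ?eqxx // => k /negbTE hk.
by rewrite mxE hk mulr0.
Qed.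

Lemma trD (A : 'M[C]_n.+1) d : \tr (A *m Dm d) = \sum_i A i i * d i.
Proof. by rewrite /mxtrace; apply: eq_bigr => i _; rewrite mulmDE. Qed.

Lemma DmM d e : Dm d *m Dm e = Dm (fun i => d i * e i).
Proof.
apply/matrixP => i j; rewrite mulDmE !mxE.
by case: eqP => [->|_]; rewrite ?mulr0.
Qed.

Lemma diag_comm (G : 'M[C]_n.+1) d :
  (forall i j, i != j -> G i j = 0) -> G *m Dm d = Dm d *m G.
Proof.
move=> hG; apply/matrixP => i j; rewrite mulDmE mulmDE.
case: (eqVneq i j) => [->|hij]; first by rewrite mulrC.
by rewrite hG // mulr0 mul0r.
Qed.

Lemma key (G f : 'M[C]_n.+1) d :
  G \in unitmx -> (forall i j, i != j -> G i j = 0) ->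
  \tr (adj G f *m Dm d) = \sum_i (f i i)^*%R * d i.
Proof.
move=> hu hG; rewrite /adj -!mulmxA mxtrace_mulC diag_comm //.
rewrite -!mulmxA mulmxV // mulmx1 trD.
by apply: eq_bigr => i _; rewrite !mxE.
Qed.

Lemma ctrDm d : ctr (Dm d) = Dm (fun i => (d i)^*%R).
Proof.
apply/matrixP => i j; rewrite /ctr !mxE eq_sym.
by case: (eqVneq i j) => [->|_]; rewrite ?rmorph0.
Qed.

Lemma unitG (G : 'M[C]_n.+1) : inner_product G -> G \in unitmx.
Proof.
move=> [_ hpos]; rewrite unitmxE unitfE -det_tr.
apply/negP => /det0P [v hv0 hv].
have hw : v^T != 0 by apply: contra hv0 => /eqP h; rewrite -[v]trmxK h trmx0.
have := hpos _ hw.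
have h0 : G *m v^T = 0 by rewrite -[G]trmxK -trmx_mul hv trmx0.
by rewrite -mulmxA h0 mulmx0 mxE ltxx.
Qed.

Lemma diagG (q : C) (G : 'M[C]_n.+1) : G \in unitmx -> star_rep q G ->
  forall i j, i != j -> G i j = 0.
Proof.
move=> hu [hH _] i j hij.
have hP : piH R n = Dm (fun k => (wt k)%:~R) by [].
have hc : ctr (piH R n) = piH R n.
  by rewrite hP ctrDm; apply/matrixP => a b; rewrite !mxE rmorph_int.
have hcomm : piH R n *m G = G *m piH R n.
  by move: hH; rewrite /adj hc => /(congr1 (mulmx G)); rewrite !mulmxA mulmxV // mul1mx.
have := congr1 (fun M : 'M[C]_n.+1 => M i j) hcomm; rewrite /= hP mulDmE mulmDE.
move=> /eqP; rewrite [X in _ == X]mulrC -subr_eq0 -mulrBl mulf_eq0 => /orP [|/eqP //].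
rewrite subr_eq0 => /eqP /intr_inj; rewrite /wt => h.
have hv : nat_of_ord i = nat_of_ord j by move: h; lia.
by rewrite (val_inj hv) eqxx in hij.
Qed.

End H.

Lemma conjXz (R : realType) (x : R[i]) (k : int) : (x ^ k)^*%R = (x^*%R) ^ k.
Proof. by case: k => m /=; rewrite ?fmorphV rmorphXn. Qed.

Lemma qnumJ (R : realType) (q : R[i]) k : q != 0 -> (qnum q k)^*%R = qnum (q^*%R) k.
Proof.
move=> hq; rewrite /qnum.
have -> : (q^*%R == 1) = (q == 1).
  by apply/eqP/eqP => [h|->]; rewrite ?rmorph1 // -[q]conjCK h rmorph1.
case: eqP => _; first by rewrite rmorph_int.
have hu : q \is a GRing.unit by rewrite unitfE.
by rewrite rmorphM !rmorphB !fmorphV rmorphB !fmorphV -!conjXz.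
Qed.

Lemma qnumV (R : realType) (q : R[i]) k : qnum (q^-1) k = qnum q k.
Proof.
rewrite /qnum invr_eq1; case: eqP => // _.
rewrite !exprz_inv opprK invrK -[q^-1 - q]opprB -[q ^ (- k) - q ^ k]opprB.
by rewrite invrN mulrNN.
Qed.

Theorem mainTheorem1 (R : realType) (N : nat) (q : R[i]) (r : R)
    (G : 'M[R[i]]_N.+1) :
  (0 < N)%N -> 0 < r ->
  inner_product G -> star_rep q G ->
  ((exists a : R, 0 < a /\ q = a%:C) ->
     forall f : 'M[R[i]]_N.+1,
       (integral q r f)^* = integral q r (adj G f))
  /\
  ((exists phi : R, 0 < phi /\ phi < (2 * N%:R)^-1 /\
      q = cos (pi * phi) +i* sin (pi * phi)) ->
     forall f : 'M[R[i]]_N.+1,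
       (integral q r f)^* = integral q r (adj G f *m piqH N q (-2))).
Proof.
move=> _ _ hip hst.
have hu := @unitG R N G hip.
have hG := @diagG R N q G hu hst.
have hP : forall a, piqH N q a = @Dm R N (fun k => q ^ (a * wt k)) by [].
split.
- move=> [a [ha hq]] f.
  have hq0 : q != 0.
    by rewrite hq; apply/eqP => -[h]; move: ha; rewrite h ltxx.
  have hqJ : q^*%R = q by rewrite hq; exact: conjc_real.
  have hqn : (qnum q (N.+1)%N)^*%R = qnum q (N.+1)%N by rewrite qnumJ // hqJ.
  change ((integral q r f)^*%R = integral q r (adj G f)); rewrite /integral.
  rewrite hP key // trD rmorphM rmorph_sum; congr (_ * _).
    rewrite rmorphM fmorphV; congr (_ * _); first exact: conjc_real.
    by congr (_^-1); exact: hqn.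
  apply: eq_bigr => k _; rewrite rmorphM; congr (_ * _).
  have hk : (q ^ (1 * wt k))^*%R = q ^ (1 * wt k) by rewrite conjXz hqJ.
  exact: hk.
- move=> [phi [h1 [h2 hq]]] f.
  have hqq0 : q * conjc q = 1.
    by rewrite -sqr_normc -add_Re2_Im2 hq /= cos2Dsin2.
  have hqq : q * q^*%R = 1 := hqq0.
  have hq0 : q != 0.
    by apply/eqP => h0; move: hqq; rewrite h0 mul0r => /eqP; rewrite eq_sym oner_eq0.
  have hqJ : q^*%R = q^-1 by rewrite -[q^*%R]mul1r -(mulVf hq0) -mulrA hqq mulr1.
  have hqn : (qnum q (N.+1)%N)^*%R = qnum q (N.+1)%N by rewrite qnumJ // hqJ qnumV.
  change ((integral q r f)^*%R = integral q r (adj G f *m piqH N q (-2))); rewrite /integral.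
  rewrite -mulmxA (hP (-2)) (hP 1) DmM key // trD rmorphM rmorph_sum; congr (_ * _).
    rewrite rmorphM fmorphV; congr (_ * _); first exact: conjc_real.
    by congr (_^-1); exact: hqn.
  apply: eq_bigr => k _; rewrite rmorphM; congr (_ * _).
  have hk : (q ^ (1 * wt k))^*%R = q ^ (-2 * wt k) * q ^ (1 * wt k).
    rewrite conjXz hqJ exprz_inv -expfzDr //; congr (_ ^ _).
    by rewrite !mul1r mulNr -mulrN ?mulrDl; lia.
  exact: hk.
Qed.
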